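(* Let $k$ be an even positive integer and $m\geq 1$ an integer. Let $G$ be a connected graph whose complement $\overline{G}$ is isomorphic to the disjoint union of $\frac{k}{2}$ copies of the path $P_5$ (on 5 vertices) and $m$ isolated vertices. Then $G$ has exactly $k$ basis forced vertices and $\dim(G)=k+m-1$.
   Context: All graphs are finite and simple. $\overline{G}$ denotes the complement graph. For vertices $u,v$ of a connected graph $G$, $d(u,v)$ is the length of a shortest $u$–$v$ path. A set $R\subseteq V(G)$ is a resolving set if for all distinct $x,y\in V(G)$ there is $r\in R$ with $d(r,x)\neq d(r,y)$. The metric dimension $\dim(G)$ is the minimum cardinality of a resolving set, and a resolving set of cardinality $\dim(G)$ is a metric basis. A vertex is a basis forced vertex if it belongs to every metric basis of $G$. *)

(* Defs.v *)
From mathcomp Require Import all_boot.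
Set Implicit Arguments. Unset Strict Implicit. Unset Printing Implicit Defensive.

Section Graphs.
Variable T : finType.
Implicit Types (e : rel T) (x y : T) (R : {set T}).

Definition simple_graph e := symmetric e /\ irreflexive e.

Definition compl_graph e : rel T := fun x y => (x != y) && ~~ e x y.

Definition connected_graph e := forall x y, connect e x y.

Definition walk_of_len e n x y : bool :=
  [exists p : n.-tuple T, path e x p && (last x p == y)].

(* d(x,y): least n such that an x-y walk of length n exists
   (for connected graphs such n exists and is < #|T|) *)
Definition dist e x y : nat :=
  find (fun n => walk_of_len e n x y) (iota 0 #|T|).

Definition resolving e R : bool :=
  [forall x, forall y, (x != y) ==> [exists r in R, dist e r x != dist e r y]].

Definition metric_dim e : nat :=
  #|[arg min_(R < [set: T] | resolving e R) #|R|]|.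

Definition metric_basis e R : bool :=
  resolving e R && (#|R| == metric_dim e).

Definition basis_forced_set e : {set T} :=
  [set v | [forall R : {set T}, metric_basis e R ==> (v \in R)]].

End Graphs.

Definition P5s_iso_type (p m : nat) : finType := (('I_p * 'I_5) + 'I_m)%type.

Definition P5s_iso_rel (p m : nat) : rel (P5s_iso_type p m) :=
  fun u v => match u, v with
  | inl (i, a), inl (j, b) =>
      (i == j) && (((nat_of_ord a).+1 == b) || ((nat_of_ord b).+1 == a))
  | _, _ => false
  end.

Arguments P5s_iso_rel : clear implicits.

Definition graph_iso (T U : finType) (e : rel T) (e' : rel U) : Prop :=
  exists f : T -> U, bijective f /\ forall x y, e x y = e' (f x) (f y).

(* Main.v *)
Require Import Defs.
From mathcomp Require Import all_boot zify.
Set Implicit Arguments. Unset Strict Implicit. Unset Printing Implicit Defensive.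

Definition adjn (a b : nat) : bool := (a.+1 == b) || (b.+1 == a).

Lemma F1 : all (fun c => has (fun x => has (fun y => (x != y) && (x != c) && (y != c) && (adjn c x == adjn c y)) (iota 0 5)) (iota 0 5)) (iota 0 5).
Proof. by []. Qed.

Definition P1b a b := all (fun x => all (fun y => (x != y) ==> (x != a) ==> (x != b) ==> (y != a) ==> (y != b) ==> ((adjn a x != adjn a y) || (adjn b x != adjn b y))) (iota 0 5)) (iota 0 5).
Definition P2b a b := all (fun x => (x != a) ==> (x != b) ==> (adjn a x || adjn b x)) (iota 0 5).

Lemma F2 : all (fun a => all (fun b => (a != b) ==> P1b a b ==> P2b a b ==> (((a == 1) && (b == 3)) || ((a == 3) && (b == 1)))) (iota 0 5)) (iota 0 5).
Proof. by []. Qed.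
Lemma F3 : P1b 1 3. Proof. by []. Qed.
Lemma F4 : P2b 1 3. Proof. by []. Qed.

Lemma P1bP a b : reflect (forall x y, x < 5 -> y < 5 -> x != y -> x != a -> x != b -> y != a -> y != b -> (adjn a x != adjn a y) || (adjn b x != adjn b y)) (P1b a b).
Proof.
apply: (iffP idP).
  move=> /allP H x y hx hy; have /allP H2 := H x ltac:(by rewrite mem_iota).
  by move=> h1 h2 h3 h4 h5; move: (H2 y ltac:(by rewrite mem_iota)); rewrite h1 h2 h3 h4 h5.
move=> H; apply/allP => x; rewrite mem_iota => /andP[_ hx]; apply/allP => y; rewrite mem_iota => /andP[_ hy].
by apply/implyP => ?; apply/implyP => ?; apply/implyP => ?; apply/implyP => ?; apply/implyP => ?; apply: H.
Qed.

Lemma P2bP a b : reflect (forall x, x < 5 -> x != a -> x != b -> adjn a x || adjn b x) (P2b a b).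
Proof.
apply: (iffP idP).
  by move=> /allP H x hx h1 h2; move: (H x ltac:(by rewrite mem_iota)); rewrite h1 h2.
move=> H; apply/allP => x; rewrite mem_iota => /andP[_ hx].
by apply/implyP => ?; apply/implyP => ?; apply: H.
Qed.

Lemma F2P a b : a < 5 -> b < 5 -> a != b -> P1b a b -> P2b a b -> ((a == 1) && (b == 3)) || ((a == 3) && (b == 1)).
Proof.
move=> ha hb; have /allP H := F2; have /allP H2 := H a ltac:(by rewrite mem_iota).
move=> hab h1 h2; move: (H2 b ltac:(by rewrite mem_iota)); by rewrite hab h1 h2.
Qed.

Lemma F1P c : c < 5 -> exists x y, [/\ x < 5, y < 5, x != y, x != c & y != c] /\ adjn c x = adjn c y.
Proof.
move=> hc; have /allP H := F1; move: (H c ltac:(by rewrite mem_iota)) => /hasP [x].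
rewrite mem_iota => /andP[_ hx] /hasP [y]; rewrite mem_iota => /andP[_ hy] /andP[/andP[/andP[h1 h2] h3] /eqP h4].
by exists x, y.
Qed.
Section Core.
Variables p m : nat.
Local Notation U := (P5s_iso_type p m).
Local Notation relU := (P5s_iso_rel p m).

Lemma relU_inr (u : U) j : relU u (inr j) = false.
Proof. by case: u => [[]|]. Qed.
Lemma relU_inr' (u : U) j : relU (inr j) u = false.
Proof. by case: u => [[]|]. Qed.
Lemma relU_inl i a i' b : relU (inl (i, a)) (inl (i', b)) = (i == i') && adjn a b.
Proof. by []. Qed.

Definition dU (r x : U) : nat := if r == x then 0 else if relU r x then 2 else 1.
Definition resU (S : {set U}) : Prop :=
  forall x y : U, x != y -> exists2 r, r \in S & dU r x != dU r y.

Lemma sep S x y : resU S -> x != y -> x \notin S -> y \notin S ->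
  exists2 r, r \in S & relU r x != relU r y.
Proof.
move=> HS nxy hx hy; have [r rS H] := HS x y nxy; exists r => //.
have rx : r != x by apply: contraNneq hx => <-.
have ry : r != y by apply: contraNneq hy => <-.
move: H; rewrite /dU (negbTE rx) (negbTE ry).
by case: (relU r x); case: (relU r y).
Qed.

Lemma sepH S i (a b : 'I_5) : resU S -> a != b -> inl (i, a) \notin S -> inl (i, b) \notin S ->
  exists2 c : 'I_5, inl (i, c) \in S & adjn c a != adjn c b.
Proof.
move=> HS nab ha hb.
have nxy : (inl (i, a) : U) != inl (i, b).
  by apply: contra nab => /eqP [->].
have [[[i' c]|j] rS] := sep HS nxy ha hb; last by rewrite !relU_inr'.
rewrite !relU_inl; case E: (i' == i) => //= H; move/eqP: E => E; rewrite E in rS.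
by exists c.
Qed.

Lemma sepH2 S i (a : 'I_5) j : resU S -> inl (i, a) \notin S -> (inr j : U) \notin S ->
  exists2 c : 'I_5, inl (i, c) \in S & adjn c a.
Proof.
move=> HS ha hb.
have [[[i' c]|j'] rS] := sep HS (isT : (inl (i, a) : U) != inr j) ha hb; last by rewrite !relU_inr'.
rewrite relU_inr relU_inl; case E: (i' == i) => //= H; move/eqP: E => E; rewrite E in rS.
by exists c => //; move: H; case: adjn.
Qed.

Definition Ci (S : {set U}) i := [set a : 'I_5 | inl (i, a) \in S].
Definition IS (S : {set U}) := [set j : 'I_m | inr j \in S].

Lemma card_dec (S : {set U}) : #|S| = \sum_(i < p) #|Ci S i| + #|IS S|.
Proof.
rewrite -sum1_card big_mkcond /= big_sumType /=.
congr (_ + _).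
  rewrite (eq_bigr (fun i => \sum_(a : 'I_5) (if inl (i, a) \in S then 1 else 0))); last first.
    by move=> i _; rewrite -sum1_card big_mkcond /=; apply: eq_bigr => a _; rewrite inE.
  rewrite pair_big /=; by apply: congr_big => // -[].
by rewrite -sum1_card [in RHS]big_mkcond /=; apply: congr_big => // a _; rewrite inE.
Qed.


Lemma Ci_ge2 S i : resU S -> 2 <= #|Ci S i|.
Proof.
move=> HS; rewrite leqNgt ltnS; apply/negP => /card_le1_eqP H1.
have [c Hc] : exists c : 'I_5, forall a, a \in Ci S i -> a = c.
  case: (set_0Vmem (Ci S i)) => [->|[c hc]].
    by exists ord0 => a; rewrite inE.
  by exists c => a ha; apply: H1.
have [x [y [[hx hy nxy nxc nyc] exy]]] := F1P (ltn_ord c).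
pose a := Ordinal hx; pose b := Ordinal hy.
have nab : a != b by [].
have hna : forall d : 'I_5, val d != val c -> inl (i, d) \notin S.
  move=> d hd; apply/negP => hdS.
  have : d \in Ci S i by rewrite inE.
  by move/Hc => ed; rewrite ed eqxx in hd.
have [c' c'S] := sepH HS nab (hna a nxc) (hna b nyc).
have : c' \in Ci S i by rewrite inE.
by move/Hc => ->; rewrite /= exy eqxx.
Qed.

Lemma IS_ge S : resU S -> m - 1 <= #|IS S|.
Proof.
move=> HS.
have H : #|~: IS S| <= 1.
  apply/card_le1_eqP => j j'; rewrite !inE => hj hj'.
  case: (eqVneq j j') => // njj.
  have nxy : (inr j : U) != inr j' by apply/negP => /eqP [e]; rewrite e eqxx in njj.
  by have [r _] := sep HS nxy hj hj'; rewrite !relU_inr.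
have := cardsC (IS S); rewrite card_ord; lia.
Qed.

Lemma C1 S : resU S -> p.*2 + (m - 1) <= #|S|.
Proof.
move=> HS; rewrite card_dec; apply: leq_add; last exact: IS_ge.
have -> : p.*2 = \sum_(i < p) 2 by rewrite sum_nat_const card_ord muln2.
by apply: leq_sum => i _; apply: Ci_ge2.
Qed.

Definition o1 : 'I_5 := @Ordinal 5 1 isT.
Definition o3 : 'I_5 := @Ordinal 5 3 isT.

Lemma C3 S : 0 < m -> resU S -> #|S| = p.*2 + (m - 1) -> forall i, inl (i, o1) \in S /\ inl (i, o3) \in S.
Proof.
move=> hm HS HC.
have hge := fun i => Ci_ge2 i HS.
have hI := IS_ge HS.
have Hs : \sum_(i < p) #|Ci S i| = p.*2 + \sum_(i < p) (#|Ci S i| - 2).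
  have -> : p.*2 = \sum_(i < p) 2 by rewrite sum_nat_const card_ord muln2.
  rewrite -big_split /=.
  by apply: eq_bigr => i _; rewrite subnKC.
move: HC; rewrite card_dec Hs => HC.
have HD : \sum_(i < p) (#|Ci S i| - 2) = 0 by lia.
have HIm : #|IS S| = m - 1 by lia.
have HCi : forall i, #|Ci S i| = 2.
  move=> i; move/eqP: HD; rewrite sum_nat_eq0 => /forallP /(_ i) /=.
  by rewrite subn_eq0 => h; apply/eqP; rewrite eqn_leq h hge.
have [j hj] : exists j : 'I_m, inr j \notin S.
  case: (pickP [pred j : 'I_m | inr j \notin S]) => [j hj|none]; first by exists j.
  have : #|[set: 'I_m]| <= #|IS S|.
    by apply: subset_leq_card; apply/subsetP => j _; rewrite inE; move: (none j) => /= /negbFE.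
  rewrite cardsT card_ord HIm; lia.
move=> i.
have : #|Ci S i| == 2 by rewrite HCi.
move=> /cards2P [a [b [nab Eab]]].
have inab : forall d : 'I_5, (inl (i, d) \in S) = (d == a) || (d == b).
  by move=> d; rewrite -in_set2 -Eab inE.
have hP1 : P1b a b.
  apply/P1bP => x y hx hy nxy nxa nxb nya nyb.
  have h1 : inl (i, Ordinal hx) \notin S by rewrite inab; apply/norP; split.
  have h2 : inl (i, Ordinal hy) \notin S by rewrite inab; apply/norP; split.
  have [c cS hc] := sepH HS (nxy : Ordinal hx != Ordinal hy) h1 h2.
  by move: cS hc; rewrite inab => /orP [] /eqP -> /= ->; rewrite ?orbT.
have hP2 : P2b a b.
  apply/P2bP => x hx nxa nxb.
  have h1 : inl (i, Ordinal hx) \notin S by rewrite inab; apply/norP; split.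
  have [c cS hc] := sepH2 HS h1 hj.
  by move: cS hc; rewrite inab => /orP [] /eqP -> /= ->; rewrite ?orbT.
have := F2P (ltn_ord a) (ltn_ord b) nab hP1 hP2.
rewrite !inab -!(inj_eq val_inj) /=.
by case/orP => /andP [/eqP -> /eqP ->].
Qed.


Definition S0 (j : 'I_m) : {set U} := [set x : U | match x with
  | inl (_, a) => (val a == 1) || (val a == 3) | inr j' => j' != j end].
Definition B0 : {set U} := [set x : U | match x with
  | inl (_, a) => (val a == 1) || (val a == 3) | inr _ => false end].

Lemma Ci13 : [set a : 'I_5 | (val a == 1) || (val a == 3)] = [set o1; o3].
Proof. by apply/setP => a; rewrite !inE -!(inj_eq val_inj). Qed.

Lemma card_S0 j : #|S0 j| = p.*2 + (m - 1).
Proof.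
rewrite card_dec; congr (_ + _).
  rewrite (eq_bigr (fun _ => 2)); first by rewrite sum_nat_const card_ord muln2.
  move=> i _; rewrite /Ci.
  have -> : [set a | inl (i, a) \in S0 j] = [set a : 'I_5 | (val a == 1) || (val a == 3)].
    by apply/setP => a; rewrite !inE.
  by rewrite Ci13 cards2.
have -> : IS (S0 j) = [set~ j] by apply/setP => j'; rewrite !inE.
by rewrite cardsC1 card_ord subn1.
Qed.

Lemma card_B0 : #|B0| = p.*2.
Proof.
rewrite card_dec.
have -> : IS B0 = set0 by apply/setP => j'; rewrite !inE.
rewrite cards0 addn0.
rewrite (eq_bigr (fun _ => 2)); first by rewrite sum_nat_const card_ord muln2.
move=> i _; rewrite /Ci.
have -> : [set a | inl (i, a) \in B0] = [set a : 'I_5 | (val a == 1) || (val a == 3)].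
  by apply/setP => a; rewrite !inE.
by rewrite Ci13 cards2.
Qed.

Lemma dU_self x y : x != y -> dU x x != dU x y.
Proof. by move=> nxy; rewrite /dU eqxx (negbTE nxy); case: relU. Qed.

Lemma dU_rel r x y : r != x -> r != y -> relU r x != relU r y -> dU r x != dU r y.
Proof. by rewrite /dU => /negbTE -> /negbTE ->; case: relU; case: relU. Qed.

Lemma res_S0 j : resU (S0 j).
Proof.
move=> x y nxy.
case hx: (x \in S0 j); first by exists x => //; apply: dU_self.
case hy: (y \in S0 j); first by exists y => //; rewrite eq_sym; apply: dU_self; rewrite eq_sym.
have key : forall (i : 'I_p) (a : 'I_5) (z : U), inl (i, a) \notin S0 j -> z \notin S0 j ->
    (forall c, relU (inl (i, c)) z = false) -> exists2 r, r \in S0 j & dU r (inl (i, a)) != dU r z.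
  move=> i a z ha hz0 hz.
  have ha' : (val a != 1) && (val a != 3) by move: ha; rewrite inE negb_or.
  case/andP: ha' => a1 a3.
  have := (P2bP _ _ F4) (val a) (ltn_ord a) a1 a3 => /orP [h|h].
    exists (inl (i, o1)); first by rewrite inE.
    apply: dU_rel.
    - by apply/negP => /eqP [e]; move: a1; rewrite -e.
    - by apply: contraNneq hz0 => <-; rewrite inE.
    by rewrite hz relU_inl eqxx andTb h.
  exists (inl (i, o3)); first by rewrite inE.
  apply: dU_rel.
  - by apply/negP => /eqP [e]; move: a3; rewrite -e.
  - by apply: contraNneq hz0 => <-; rewrite inE.
  by rewrite hz relU_inl eqxx andTb h.
case: x hx nxy => [[ix a]|jx] hx nxy; case: y hy nxy => [[iy b]|jy] hy nxy.
- case: (eqVneq ix iy) => [eii|nii]; last first.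
    apply: key; rewrite ?hx ?hy // => c; by rewrite relU_inl (negbTE nii).
  rewrite -eii in hy nxy *.
  have nab : a != b by apply: contra nxy => /eqP ->.
  have ha' : (val a != 1) && (val a != 3) by move: hx; rewrite inE => /negbT; rewrite negb_or.
  have hb' : (val b != 1) && (val b != 3) by move: hy; rewrite inE => /negbT; rewrite negb_or.
  case/andP: ha' => a1 a3; case/andP: hb' => b1 b3.
  have := (P1bP _ _ F3) (val a) (val b) (ltn_ord a) (ltn_ord b) nab a1 a3 b1 b3 => /orP [h|h].
    exists (inl (ix, o1)); first by rewrite inE.
    apply: dU_rel; last by rewrite !relU_inl eqxx !andTb.
    + by apply: contraFneq hx => <-; rewrite inE.
    + by apply: contraFneq hy => <-; rewrite inE.
  exists (inl (ix, o3)); first by rewrite inE.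
  apply: dU_rel; last by rewrite !relU_inl eqxx !andTb.
  + by apply: contraFneq hx => <-; rewrite inE.
  + by apply: contraFneq hy => <-; rewrite inE.
- by apply: key; rewrite ?hx ?hy // => c; rewrite relU_inr.
- have hy' : inl (iy, b) \notin S0 j by rewrite hy.
  have hx' : (inr jx : U) \notin S0 j by rewrite hx.
  have [r rS hr] := key iy b (inr jx) hy' hx' (fun c => relU_inr _ _).
  by exists r => //; rewrite eq_sym.
- move: hx hy; rewrite !inE => /negbT /negbNE /eqP e1 /negbT /negbNE /eqP e2.
  by rewrite e1 e2 eqxx in nxy.
Qed.

End Core.

Lemma dist_dU (T : finType) (e : rel T) p m (f : T -> P5s_iso_type p m) g :
  0 < m -> 0 < p -> irreflexive e -> cancel f g -> cancel g f ->
  (forall x y, compl_graph e x y = P5s_iso_rel p m (f x) (f y)) ->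
  forall x y, dist e x y = dU (f x) (f y).
Proof.
move=> hm hp irr fK gK Hiso.
have eE : forall x y, e x y = (x != y) && ~~ P5s_iso_rel p m (f x) (f y).
  move=> x y; rewrite -Hiso /compl_graph; case: eqVneq => [->|] /=; first by rewrite irr.
  by rewrite negbK.
have cT : 2 < #|T|.
  rewrite (bij_eq_card (Bijective fK gK)) /P5s_iso_type card_sum card_prod !card_ord; lia.
have w0 : forall x y, walk_of_len e 0 x y = (x == y).
  move=> x y; apply/existsP/idP => [[t]|/eqP <-]; last by exists [tuple]; rewrite /= eqxx.
  by rewrite (tuple0 t) /=.
have w1 : forall x y, walk_of_len e 1 x y = e x y.
  move=> x y; apply/existsP/idP => [[t]|h]; last by exists [tuple y]; rewrite /= h eqxx.
  by case/tupleP: t => z t; rewrite (tuple0 t) /= andbT => /andP [h /eqP <-].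
have w2 : forall x y, P5s_iso_rel p m (f x) (f y) -> walk_of_len e 2 x y.
  move=> x y h; apply/existsP.
  pose z := g (inr (Ordinal hm)).
  have fz : f z = inr (Ordinal hm) by rewrite /z gK.
  have xz : x != z by apply: contraTneq h => ->; rewrite fz relU_inr'.
  have zy : z != y by apply: contraTneq h => <-; rewrite fz relU_inr.
  exists [tuple z; y]; rewrite /= !eE fz relU_inr relU_inr' xz zy /=.
  by rewrite eqxx.
move=> x y; rewrite /dist /dU.
case: #|T| cT => [|[|[|n]]] // _.
rewrite /= (inj_eq (can_inj fK)) w0; case: eqVneq => // nxy /=.
rewrite w1 eE nxy /=; case h: (P5s_iso_rel p m (f x) (f y)) => //=.
by rewrite w2.
Qed.

Theorem lemma9 (k m : nat) (T : finType) (e : rel T) :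
  ~~ odd k -> 0 < k -> 1 <= m ->
  simple_graph e -> connected_graph e ->
  graph_iso (compl_graph e) (P5s_iso_rel k./2 m) ->
  #|basis_forced_set e| = k /\ metric_dim e = k + m - 1.
Proof.
move=> hev hk hm [sym irr] conn [f [[g fK gK] fiso]].
set p := k./2 in f g fK gK fiso *.
have kE : k = p.*2 by rewrite -[LHS]odd_double_half (negbTE hev).
have hp : 0 < p by move: hk; rewrite kE double_gt0.
have dE := dist_dU hm hp irr fK gK fiso.
have resE : forall R : {set T}, resolving e R <-> resU (f @: R).
  move=> R; split.
  - move=> /forallP H x' y' nxy.
    have nxy2 : g x' != g y' by rewrite (inj_eq (can_inj gK)).
    move: (H (g x')) => /forallP /(_ (g y')) /implyP /(_ nxy2) /existsP [r /andP [rR hr]].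
    exists (f r); first exact: imset_f.
    by move: hr; rewrite !dE !gK.
  - move=> H; apply/forallP => x; apply/forallP => y; apply/implyP => nxy.
    have nf : f x != f y by rewrite (inj_eq (can_inj fK)).
    have [r' /imsetP [r rR ->] hr] := H _ _ nf.
    by apply/existsP; exists r; rewrite rR /= !dE.
have fpre : forall S : {set P5s_iso_type p m}, f @: (g @: S) = S.
  move=> S; apply/setP => u; apply/imsetP/idP => [[x /imsetP [v vS ->] ->]|uS]; first by rewrite gK.
  by exists (g u); [exact: imset_f | rewrite gK].
have cardg : forall S : {set P5s_iso_type p m}, #|g @: S| = #|S|.
  by move=> S; rewrite card_imset //; exact: can_inj gK.
have cardf : forall R : {set T}, #|f @: R| = #|R|.
  by move=> R; rewrite card_imset //; exact: can_inj fK.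
pose j0 : 'I_m := Ordinal hm.
have resT : resolving e [set: T].
  apply/resE => x y nxy; exists x; [by rewrite -[x]gK imset_f | exact: dU_self].
have resS0 : forall j, resolving e (g @: S0 p j).
  by move=> j; apply/resE; rewrite fpre; exact: res_S0.
have md : metric_dim e = p.*2 + (m - 1).
  rewrite /metric_dim; case: arg_minnP => [|R HR Hmin]; first exact: resT.
  apply/eqP; rewrite eqn_leq; apply/andP; split.
    by have := Hmin (g @: S0 p j0); rewrite cardg card_S0; apply; apply: resS0.
  by rewrite -cardf; apply: C1; apply/resE.
have bf : basis_forced_set e = g @: B0 p m.
  apply/setP => v; rewrite inE; apply/forallP/idP => [H|].
  - pose j := if f v is inr j' then j' else j0.
    have := H (g @: S0 p j); rewrite /metric_basis md cardg card_S0 eqxx andbT resS0 /=.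
    move=> /imsetP [u uS vE].
    have fvu : f v = u by rewrite vE gK.
    apply/imsetP; exists u => //.
    move: uS; rewrite /j fvu !inE; case: u {vE fvu} => [[i a]|j''] //=.
    by rewrite eqxx.
  - move=> /imsetP [b bB ->] R; apply/implyP => /andP [hR /eqP cR].
    have hS := (resE R).1 hR.
    have cS : #|f @: R| = p.*2 + (m - 1) by rewrite cardf cR md.
    have hb : b \in f @: R.
      case: b bB => [[i a]|jb]; rewrite inE //= => /orP [] /eqP ha.
        have -> : a = o1 by apply: val_inj.
        by case: (C3 hm hS cS i).
      have -> : a = o3 by apply: val_inj.
      by case: (C3 hm hS cS i).
    by case/imsetP: hb => r rR ->; rewrite fK.
split.
  by rewrite bf cardg card_B0 kE.
rewrite md kE; lia.
Qed.
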